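(* Let $X_n=(\mathbb{C}^n,\|\cdot\|_{X_n})$ be a Banach lattice, $J\subset\mathbb{N}_0^n$, and $\alpha\in\Lambda(m,n)$. Then (i) $c_{X_n}(\alpha)\,c_{X_n'}(\alpha)\le\frac{m^m}{\alpha^\alpha}$; (ii) $c_{X_n}(\alpha)\le\frac{\|\alpha\|_{X_n}^m}{\alpha^\alpha}$.
   Context: A Banach lattice $X_n=(\mathbb{C}^n,\|\cdot\|)$ is a norm with $\|z\|\le\|w\|$ whenever $|z_k|\le|w_k|$ for all $k$. $X_n'$ is its Köthe dual: $\mathbb{C}^n$ with $\|x\|_{X_n'}=\sup\{\sum_k|x_ky_k|:\|y\|_{X_n}\le1\}$. $\Lambda(m,n)=\{\alpha\in\mathbb{N}_0^n:|\alpha|=m\}$, $\alpha^\alpha=\prod_i\alpha_i^{\alpha_i}$ (with $0^0=1$), and $\|\alpha\|_{X_n}$ is the norm of $(\alpha_1,\dots,\alpha_n)$ in $X_n$. For a normed space $Y_n=(\mathbb{C}^n,\|\cdot\|)$, $c_{Y_n}(\alpha)=1/\sup_{z\in B_{Y_n}}|z^\alpha|$, $B_{Y_n}$ the open unit ball. *)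

(* Defs.v *)
From HB Require Import structures.
From mathcomp Require Import all_boot all_order all_algebra.
From mathcomp Require Import all_classical all_reals.
From mathcomp Require Import complex.
Set Implicit Arguments. Unset Strict Implicit. Unset Printing Implicit Defensive.
Import Order.TTheory GRing.Theory Num.Theory.
Local Open Scope ring_scope.
Local Open Scope classical_set_scope.

Definition cabs (R : realType) (c : R[i]) : R := Normc.normc c.

Definition is_norm (R : realType) (n : nat) (N : ('I_n -> R[i]) -> R) : Prop :=
  [/\ forall z, N z = 0 -> z = (fun _ => 0),
      forall z w, N (fun k => z k + w k) <= N z + N w
    & forall (c : R[i]) z, N (fun k => c * z k) = cabs c * N z].

(* Banach lattice on C^n (completeness is automatic in finite dimension):
   a norm which is monotone w.r.t. coordinatewise moduli. *)
Definition banach_lattice (R : realType) (n : nat) (N : ('I_n -> R[i]) -> R) : Prop :=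
  is_norm N /\
  forall z w, (forall k, cabs (z k) <= cabs (w k)) -> N z <= N w.

Definition kothe_dual (R : realType) (n : nat) (N : ('I_n -> R[i]) -> R)
  (x : 'I_n -> R[i]) : R :=
  sup [set (\sum_k cabs (x k * y k)) | y in [set y | N y <= 1]].

Definition monom (R : realType) (n : nat) (alpha : 'I_n -> nat)
  (z : 'I_n -> R[i]) : R[i] := \prod_k z k ^+ alpha k.

Definition cY (R : realType) (n : nat) (N : ('I_n -> R[i]) -> R)
  (alpha : 'I_n -> nat) : R :=
  (sup [set cabs (monom alpha z) | z in [set z | N z < 1]])^-1.

(* alpha^alpha = prod_i alpha_i^alpha_i, with 0^0 = 1 *)
Definition apow (R : realType) (n : nat) (alpha : 'I_n -> nat) : R :=
  \prod_k ((alpha k)%:R ^+ alpha k).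

Definition avec (R : realType) (n : nat) (alpha : 'I_n -> nat) : 'I_n -> R[i] :=
  fun k => (alpha k)%:R.

(* Main.v *)
Require Import Defs.
From HB Require Import structures.
From mathcomp Require Import all_boot all_order all_algebra.
From mathcomp Require Import all_classical all_reals.
From mathcomp Require Import complex.
From mathcomp Require Import ring lra.
Import Order.TTheory GRing.Theory Num.Theory.
Local Open Scope ring_scope.
Local Open Scope classical_set_scope.
Set Implicit Arguments. Unset Strict Implicit.

Section Basic.
Variable R : realType.
Local Notation C := R[i].
Definition rc (x : R) : C := Complex x 0.
Lemma rcM (x y : R) : rc (x*y) = rc x * rc y.
Proof. exact: (rmorphM (real_complex R)). Qed.
Lemma rcD (x y : R) : rc (x+y) = rc x + rc y.
Proof. exact: (rmorphD (real_complex R)). Qed.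
Lemma rc_nat k : rc k%:R = k%:R.
Proof. exact: (rmorph_nat (real_complex R)). Qed.
Lemma rc0 : rc 0 = 0. Proof. by []. Qed.
Lemma rcN x : rc (- x) = - rc x. Proof. exact: (rmorphN (real_complex R)). Qed.
Lemma cabs_rc (x : R) : cabs (rc x) = `|x|.
Proof. by rewrite /cabs /Normc.normc /rc expr0n /= addr0 sqrtr_sqr. Qed.
Lemma cabs_ge0 (c : C) : 0 <= cabs c.
Proof. by case: c => a b; rewrite /cabs /Normc.normc sqrtr_ge0. Qed.
Lemma cabsM (c d : C) : cabs (c * d) = cabs c * cabs d.
Proof. exact: Normc.normcM. Qed.
Lemma cabs1 : cabs (1 : C) = 1. Proof. exact: Normc.normc1. Qed.
Lemma cabs0 : cabs (0 : C) = 0. Proof. exact: Normc.normc0. Qed.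
Lemma cabsX (c : C) k : cabs (c ^+ k) = cabs c ^+ k.
Proof. by elim: k => [|k IH]; rewrite ?expr0 ?cabs1 // !exprS cabsM IH. Qed.
Lemma cabs_prod n (F : 'I_n -> C) : cabs (\prod_k F k) = \prod_k cabs (F k).
Proof. exact: (big_morph _ cabsM cabs1). Qed.
Lemma cabs_nat k : cabs (k%:R : C) = k%:R.
Proof. by rewrite -rc_nat cabs_rc normr_nat. Qed.
Lemma cabs_monom n (a : 'I_n -> nat) (z : 'I_n -> C) :
  cabs (monom a z) = \prod_k cabs (z k) ^+ a k.
Proof. by rewrite /monom cabs_prod; apply: eq_bigr => k _; rewrite cabsX. Qed.

Lemma bernoulli_m (d : R) m : 0 <= d -> d <= 1 -> 1 - m%:R * d <= (1 - d) ^+ m.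
Proof.
move=> d0 d1; elim: m => [|m IH]; first by rewrite mul0r subr0 expr0.
rewrite exprS -nat1r mulrDl mul1r.
have h1 : 0 <= 1 - d by rewrite subr_ge0.
have h2 : 0 <= m%:R * d by apply: mulr_ge0.
have := ler_wpM2l h1 IH. nra.
Qed.

Lemma bernoulli_p (u : R) m : 0 <= u -> 1 + m%:R * u <= (1 + u) ^+ m.
Proof.
move=> u0; elim: m => [|m IH]; first by rewrite mul0r addr0 expr0.
rewrite exprS -nat1r mulrDl mul1r.
have h1 : 0 <= 1 + u by rewrite addr_ge0.
have h2 : 0 <= m%:R * u by apply: mulr_ge0.
have := ler_wpM2l h1 IH. nra.
Qed.

Lemma prod1D n (d : 'I_n -> R) : (forall k, 0 <= d k) ->
  1 + \sum_k d k <= \prod_k (1 + d k).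
Proof.
elim: n d => [|n IH] d d0; first by rewrite !big_ord0 addr0.
rewrite big_ord_recr big_ord_recr /=.
have := IH (fun k => d (widen_ord (leqnSn n) k)) (fun k => d0 _) => /= h.
have hs : 0 <= \sum_(i < n) d (widen_ord (leqnSn n) i) by apply: sumr_ge0.
 have := d0 ord_max; nra.
Qed.

Lemma lim_pow (X Y : R) m : 0 <= X -> 0 <= Y ->
  (forall l, 0 < l -> l < 1 -> l ^+ m * X <= Y) -> X <= Y.
Proof.
move=> X0 Y0 h; rewrite leNgt; apply/negP => YX.
have Xp : 0 < X by apply: le_lt_trans YX.
pose d := (X - Y) / (2 * (m%:R + 1) * X).
have hden : 0 < 2 * (m%:R + 1) * X by apply: mulr_gt0 => //; apply: mulr_gt0 => //; apply: ltr_wpDl.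
have d0 : 0 < d by apply: divr_gt0 => //; rewrite subr_gt0.
have dd : d * (2 * (m%:R + 1) * X) = X - Y by rewrite /d divfK // gt_eqF.
have m0 : 0 <= m%:R :> R by [].
have d1 : d < 1 by nra.
have := h (1 - d); rewrite subr_gt0 d1 ltrBlDr ltrDl d0 => /(_ isT isT) H.
have := bernoulli_m m (ltW d0) (ltW d1) => B.
have := ler_wpM2r X0 B. nra.
Qed.
End Basic.

Section Norm.
Variable R : realType.
Local Notation C := R[i].
Variable n : nat.
Variable N : ('I_n -> C) -> R.
Hypothesis HN : banach_lattice N.

Lemma Nhom c z : N (fun k => c * z k) = cabs c * N z.
Proof. by move: HN => [[_ _ h] _]; apply: h. Qed.
Lemma Nadd z w : N (fun k => z k + w k) <= N z + N w.
Proof. by move: HN => [[_ h _] _]; apply: h. Qed.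
Lemma Nmono z w : (forall k, cabs (z k) <= cabs (w k)) -> N z <= N w.
Proof. by move: HN => [_ h]; apply: h. Qed.
Lemma Nzero z : N z = 0 -> z = (fun _ => 0).
Proof. by move: HN => [[h _ _] _]; apply: h. Qed.
Lemma N0 : N (fun _ => 0) = 0.
Proof.
by have := Nhom 0 (fun _ => 0); rewrite cabs0 !mul0r.
Qed.
Lemma Nge0 z : 0 <= N z.
Proof.
have := Nadd z (fun k => -1 * z k); rewrite Nhom.
have -> : (fun k => z k + -1 * z k) = (fun _ => 0) by apply: funext => k; rewrite mulN1r subrr.
have e : cabs (-1 : C) = 1.
  by rewrite /cabs /Normc.normc /= oppr0 expr0n /= addr0 sqrrN expr1n sqrtr1.
rewrite N0 e mul1r. lra.
Qed.
Lemma Nscale r z : N (fun k => rc r * z k) = `|r| * N z.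
Proof. by rewrite Nhom cabs_rc. Qed.
Lemma Nabs z : N (fun k => rc (cabs (z k))) = N z.
Proof.
by apply/eqP; rewrite eq_le !Nmono // => k; rewrite cabs_rc ger0_norm ?cabs_ge0.
Qed.

Variable alpha : 'I_n -> nat.
Variable m : nat.
Hypothesis Hm : (\sum_k alpha k)%N = m.

Lemma monom_scale (c : R) (x : 'I_n -> R) :
  cabs (monom alpha (fun k => rc c * rc (x k))) = `|c| ^+ m * \prod_k `|x k| ^+ alpha k.
Proof.
rewrite cabs_monom.
under eq_bigr do rewrite cabsM !cabs_rc exprMn.
by rewrite big_split /= prodrXr Hm.
Qed.

Definition SY (Q : ('I_n -> C) -> R) :=
  [set cabs (monom alpha z) | z in [set z | Q z < 1]].

Lemma cYE Q : cY Q alpha = (sup (SY Q))^-1.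
Proof. by []. Qed.

Lemma SY_ge0 Q x : SY Q x -> 0 <= x.
Proof. by move=> [z _ <-]; apply: cabs_ge0. Qed.

Lemma sup_SY_ge0 Q : 0 <= sup (SY Q).
Proof.
have [hb|hb] := pselect (has_ubound (SY Q)); last first.
  by rewrite sup_out // => -[].
have [hn|hn] := pselect (SY Q !=set0); last by rewrite sup_out // => -[].
case: hn => x hx; apply: le_trans (SY_ge0 hx) _; exact: ub_le_sup.
Qed.

Lemma apow_gt0 : 0 < apow R alpha.
Proof.
rewrite /apow; apply: prodr_gt0 => k _.
have [->|h] := eqVneq (alpha k) 0%N; first by rewrite expr0.
by apply: exprn_gt0; rewrite ltr0n lt0n.
Qed.

Lemma alpha0 : m = 0%N -> forall k, alpha k = 0%N.
Proof.
move=> m0 k; move: Hm; rewrite m0 => /eqP; rewrite sum_nat_eq0 => /forallP h.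
by apply/eqP; apply: h.
Qed.

Lemma monom_alpha0 (z : 'I_n -> C) : m = 0%N -> cabs (monom alpha z) = 1.
Proof.
move=> m0; rewrite cabs_monom big1 // => k _; by rewrite alpha0 // expr0.
Qed.

Lemma sup_ge1 Q : m = 0%N -> has_ubound (SY Q) -> Q (fun _ => 0) < 1 -> 1 <= sup (SY Q).
Proof.
move=> m0 hb hq; apply: ub_le_sup => //.
by exists (fun _ => 0) => //; rewrite monom_alpha0.
Qed.

Lemma Navec_gt0 : (0 < m)%N -> 0 < N (avec R alpha).
Proof.
move=> m0.
  rewrite lt_def Nge0 // andbT; apply/eqP => /Nzero h.
  have : (\sum_k alpha k = 0)%N.
    apply/eqP; rewrite sum_nat_eq0; apply/forallP => k.
    have := congr1 (fun f => f k) h; rewrite /avec /= => /eqP.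
    by rewrite pnatr_eq0.
  by rewrite Hm => m00; move: m0; rewrite m00.
Qed.

Lemma core2 : (0 < m)%N -> has_ubound (SY N) ->
  apow R alpha / N (avec R alpha) ^+ m <= sup (SY N).
Proof.
move=> m0 hb.
have Na0 := Navec_gt0 m0.
apply: lim_pow (sup_SY_ge0 _) _ => [|l l0 l1].
  by apply: divr_ge0; [exact: ltW apow_gt0|apply: exprn_ge0; exact: Nge0].
apply: ub_le_sup => //.
exists (fun k => rc (l / N (avec R alpha)) * rc (alpha k)%:R).
  have -> : (fun k => rc (l / N (avec R alpha)) * rc (alpha k)%:R) =
            (fun k => rc (l / N (avec R alpha)) * avec R alpha k).
    by apply: funext => k; rewrite rc_nat.
  rewrite /= Nscale // ger0_norm ?divr_ge0 ?ltW // divfK ?gt_eqF //.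
rewrite monom_scale ger0_norm ?divr_ge0 ?ltW //.
under eq_bigr do rewrite normr_nat.
rewrite exprMn exprVn /apow; field; rewrite expf_eq0 gt_eqF //; by rewrite andbF.
Qed.

Lemma core1 : (0 < m)%N -> has_ubound (SY N) -> has_ubound (SY (kothe_dual N)) ->
  0 < sup (SY N) -> forall l B, 0 < l -> 1 < B -> l * B < 1 ->
  l ^+ m * (apow R alpha / m%:R ^+ m) <= sup (SY N) * sup (SY (kothe_dual N)).
Proof.
move=> m0 hX hD Mp l B l0 B1 lB.
set M := sup (SY N); set M' := sup (SY (kothe_dual N)).
have mp : 0 < m%:R :> R by rewrite ltr0n.
have m1 : 1 <= m%:R :> R by rewrite ler1n.
have Bp : 0 < B by apply: lt_trans B1.
pose t := (B - 1) / (2 * m%:R * B).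
have den : 0 < 2 * m%:R * B by apply: mulr_gt0 => //; apply: mulr_gt0.
have t0 : 0 < t by apply: divr_gt0; rewrite ?subr_gt0.
have tB : t * (2 * m%:R * B) = B - 1 by rewrite /t divfK // gt_eqF.
have mt : m%:R * t < 1 / 2 by nra.
have t1 : t < 1 / 2 by nra.
pose k := m%:R * t * (B - 1) / 2.
have kpos : 0 < k.
  rewrite /k; have : 0 < m%:R * t * (B - 1).
    by apply: mulr_gt0; [apply: mulr_gt0|rewrite subr_gt0].
  lra.
pose P := (1 + k)^-1.
have P0 : 0 < P by rewrite /P invr_gt0; apply: ltr_wpDl.
have P1 : P < 1 by rewrite /P invf_lt1 ?ltrDl // ltr_wpDl.
have PM : P * M < M by rewrite gtr_pMl.
have ne : SY N !=set0.
  exists (cabs (monom alpha (fun _ => 0))); exists (fun _ => 0) => //=.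
  by rewrite N0 // ltr01.
have [_ [a ha <-] hfa] := sup_gt ne PM.
have faM : cabs (monom alpha a) <= M by apply: ub_le_sup => //; exists a.
rewrite cabs_monom in hfa faM.
set ab := fun k => cabs (a k).
set fa := \prod_k cabs (a k) ^+ alpha k in hfa faM.
have fa0 : 0 < fa by apply: lt_trans hfa; apply: mulr_gt0.
have Mlt : M < fa * (1 + k).
  by move: hfa; rewrite /P mulrC ltr_pdivrMr // ltr_wpDl.
have tn : `|t| = t by rewrite ger0_norm // ltW.
have tn1 : `|1 - t| = 1 - t by rewrite ger0_norm // subr_ge0; lra.
have hS : forall y, N y <= 1 ->
    \sum_k0 (alpha k0)%:R * (cabs (y k0) / cabs (a k0)) <= m%:R * B.
  move=> y hy.
  set S := \sum_k0 _.
  pose c := fun k0 => rc (1 - t) * rc (cabs (a k0) + t * cabs (y k0)).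
  have Nc : N c < 1.
    rewrite /c Nscale //.
    have -> : (fun k0 => rc (cabs (a k0) + t * cabs (y k0))) =
              (fun k0 => rc (cabs (a k0)) + rc t * rc (cabs (y k0))).
      by apply: funext => k0; rewrite rcD rcM.
    have h1 := Nadd (fun k0 => rc (cabs (a k0))) (fun k0 => rc t * rc (cabs (y k0))).
    rewrite Nscale // !Nabs // in h1.
    rewrite tn in h1; rewrite tn1.
    have := Nge0 y; have := Nge0 a; have := Nge0 (fun k0 => rc (cabs (a k0)) + rc t * rc (cabs (y k0))).
    move: ha; rewrite /= => ha. nra.
  have cM : cabs (monom alpha c) <= M by apply: ub_le_sup => //; exists c.
  rewrite monom_scale in cM.
  have e : \prod_j `|cabs (a j) + t * cabs (y j)| ^+ alpha j =
            \prod_j (cabs (a j) + t * cabs (y j)) ^+ alpha j.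
    by apply: eq_bigr => j _; rewrite ger0_norm // addr_ge0 ?cabs_ge0 // mulr_ge0 ?cabs_ge0 // ltW.
  rewrite e tn1 in cM.
  pose d := fun k0 => t * ((alpha k0)%:R * (cabs (y k0) / cabs (a k0))).
  have d0 : forall k0, 0 <= d k0.
    move=> j; rewrite /d; apply: mulr_ge0; [exact: ltW | apply: mulr_ge0; [exact: ler0n | apply: divr_ge0; exact: cabs_ge0]].
  have lb : fa * (1 + t * S) <= \prod_k0 (cabs (a k0) + t * cabs (y k0)) ^+ alpha k0.
    apply: (@le_trans _ _ (\prod_k0 (cabs (a k0) ^+ alpha k0 * (1 + d k0)))).
      rewrite big_split /= -/fa; apply: ler_wpM2l; first exact: ltW.
      by rewrite /S mulr_sumr; apply: prod1D.
    apply: ler_prod => k0 _; apply/andP; split.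
      by apply: mulr_ge0; rewrite ?exprn_ge0 ?cabs_ge0 // addr_ge0.
    have [ea|ne0] := eqVneq (alpha k0) 0%N.
      by rewrite /d ea !expr0 mul0r mulr0 addr0 mulr1.
    have [z|nz] := eqVneq (cabs (a k0)) 0.
      rewrite z expr0n (negbTE ne0) mul0r; apply: exprn_ge0; apply: addr_ge0 => //.
      by apply: mulr_ge0; [exact: ltW|exact: cabs_ge0].
    have ap : 0 < cabs (a k0) by rewrite lt_def nz cabs_ge0.
    have -> : cabs (a k0) + t * cabs (y k0) = cabs (a k0) * (1 + t * (cabs (y k0) / cabs (a k0))).
      by field.
    rewrite exprMn; apply: ler_wpM2l; first by rewrite exprn_ge0 ?cabs_ge0.
    rewrite /d mulrCA; apply: bernoulli_p.
    by apply: mulr_ge0; [exact: ltW|apply: divr_ge0; exact: cabs_ge0].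
  have t1' : t <= 1 by lra.
  have Bm := bernoulli_m m (ltW t0) t1'.
  have S0 : 0 <= S.
    apply: sumr_ge0 => j _; apply: mulr_ge0; [exact: ler0n|apply: divr_ge0; exact: cabs_ge0].
  rewrite leNgt; apply/negP => hgt.
  have X0 : 0 <= fa * (1 + t * S).
    by apply: mulr_ge0; [exact: ltW|apply: addr_ge0 => //; apply: mulr_ge0 => //; exact: ltW].
  have X1 : (1 - m%:R * t) * (fa * (1 + t * S)) <= M.
    apply: le_trans cM; apply: ler_pM => //; lra.
  have id : (1 - m%:R * t) * (1 + t * (m%:R * B)) = 1 + k.
    rewrite /k. have e2 : m%:R * t * B = (B - 1) / 2 by lra.
    nra.
  have X2 : 1 + k <= (1 - m%:R * t) * (1 + t * S).
    rewrite -id; apply: ler_wpM2l; first lra.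
    apply: lerD => //; apply: ler_wpM2l; [exact: ltW|exact: ltW].
  have X3 : fa * (1 + k) <= M.
    apply: le_trans X1; rewrite mulrCA; apply: ler_wpM2l; [exact: ltW|exact: X2].
  lra.
pose w := fun j => rc (l / m%:R) * rc ((alpha j)%:R / cabs (a j)).
have lm0 : 0 <= l / m%:R by apply: divr_ge0; exact: ltW.
have Nw : kothe_dual N w < 1.
  apply: le_lt_trans lB; rewrite /kothe_dual; apply: ge_sup.
    exists (\sum_j cabs (w j * 0)); exists (fun _ => 0) => //=.
    by rewrite N0 // ler01.
  move=> _ [y hy <-].
  have -> : \sum_j cabs (w j * y j) =
      l / m%:R * \sum_j (alpha j)%:R * (cabs (y j) / cabs (a j)).
    rewrite mulr_sumr; apply: eq_bigr => j _.
    rewrite /w !cabsM !cabs_rc (ger0_norm lm0) ger0_norm; last first.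
      by apply: divr_ge0; [exact: ler0n|exact: cabs_ge0].
    by rewrite -!mulrA; congr (_ * (_ * (_ * _))); rewrite mulrC.
  apply: le_trans (ler_wpM2l lm0 (hS y hy)) _.
  by rewrite -mulrA mulKf ?gt_eqF.
have wM : cabs (monom alpha w) <= M' by apply: ub_le_sup => //; exists w.
rewrite monom_scale (ger0_norm lm0) in wM.
have e : \prod_j `|(alpha j)%:R / cabs (a j)| ^+ alpha j = apow R alpha * fa^-1.
  rewrite /apow /fa -prodfV -big_split /=; apply: eq_bigr => j _.
  rewrite ger0_norm ?exprMn ?exprVn //.
  by apply: divr_ge0; [exact: ler0n|exact: cabs_ge0].
rewrite e in wM.
have : l ^+ m * (apow R alpha / m%:R ^+ m) = (l / m%:R) ^+ m * (apow R alpha * fa^-1) * fa.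
  by rewrite exprMn exprVn; field; rewrite gt_eqF // expf_neq0 // gt_eqF.
move=> ->.
rewrite [M * M']mulrC; apply: ler_pM => //.
  apply: mulr_ge0; first exact: exprn_ge0.
  by apply: mulr_ge0; [exact: ltW apow_gt0| rewrite invr_ge0 ltW].
by apply: ltW.
Qed.

End Norm.

Theorem theorem2p19 (R : realType) (n : nat) (N : ('I_n -> R[i]) -> R)
  (m : nat) (alpha : 'I_n -> nat) :
  banach_lattice N ->
  (\sum_k alpha k)%N = m ->
  cY N alpha * cY (kothe_dual N) alpha <= (m%:R ^+ m) / apow R alpha /\
  cY N alpha <= (N (avec R alpha)) ^+ m / apow R alpha.
Proof.
move=> HN Hm.
rewrite !cYE.
set M := sup (SY alpha N); set M' := sup (SY alpha (kothe_dual N)).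
have ap := apow_gt0 R alpha.
have M0 : 0 <= M by apply: sup_SY_ge0.
have M'0 : 0 <= M' by apply: sup_SY_ge0.
have hq0 : N (fun _ => 0) < 1 by rewrite N0 // ltr01.
have kd0 : kothe_dual N (fun _ => 0) < 1.
  rewrite /kothe_dual; apply: le_lt_trans ltr01; apply: ge_sup.
    exists (\sum_(k : 'I_n) cabs ((0 : R[i]) * 0)); exists (fun _ => 0) => //=.
    by rewrite N0 // ler01.
  by move=> _ [y _ <-]; rewrite big1 // => k _; rewrite mul0r cabs0.
have apow1 : m = 0%N -> apow R alpha = 1.
  by move=> m0; rewrite /apow big1 // => k _; rewrite (alpha0 Hm) // expr0.
split.
- have rhs0 : 0 <= m%:R ^+ m / apow R alpha.
    by apply: divr_ge0; [exact: exprn_ge0|exact: ltW].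
  have [hX|hX] := pselect (has_ubound (SY alpha N)); last first.
    by rewrite /M sup_out ?invr0 ?mul0r // => -[].
  have [hD|hD] := pselect (has_ubound (SY alpha (kothe_dual N))); last first.
    by rewrite /M' sup_out ?invr0 ?mulr0 // => -[].
  move: M0; rewrite le_eqVlt => /orP[/eqP <-|Mp]; first by rewrite invr0 mul0r.
  move: M'0; rewrite le_eqVlt => /orP[/eqP <-|M'p]; first by rewrite invr0 mulr0.
  case: (posnP m) => [m0|mpos].
    have M1 : 1 <= M by exact: (sup_ge1 Hm m0 hX hq0).
    have M'1 : 1 <= M' by exact: (sup_ge1 Hm m0 hD kd0).
    rewrite apow1 // m0 expr0 divr1.
    have i1 : M^-1 <= 1 by rewrite invf_le1.
    have i2 : M'^-1 <= 1 by rewrite invf_le1.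
    have i3 : 0 <= M^-1 by rewrite invr_ge0 ltW.
    have i4 : 0 <= M'^-1 by rewrite invr_ge0 ltW.
    nra.
  have key : apow R alpha / m%:R ^+ m <= M * M'.
    apply: (@lim_pow _ _ _ m).
    - by apply: divr_ge0; [exact: ltW|exact: exprn_ge0].
    - exact: mulr_ge0 (ltW Mp) (ltW M'p).
    move=> l l0 l1.
    pose B := (1 + l) / (2 * l).
    have Be : l * B = (1 + l) / 2 by rewrite /B; field; rewrite gt_eqF.
    apply: (core1 HN Hm mpos hX hD Mp l0 (B := B)).
      by rewrite /B ltr_pdivlMr ?mul1r; [lra|apply: mulr_gt0].
    by rewrite Be; lra.
  rewrite -invfM -[m%:R ^+ m / apow R alpha]invf_div lef_pV2 ?posrE //.
    by apply: mulr_gt0.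
  by apply: divr_gt0 => //; apply: exprn_gt0; rewrite ltr0n.
- have rhs0 : 0 <= N (avec R alpha) ^+ m / apow R alpha.
    by apply: divr_ge0; [apply: exprn_ge0; exact: Nge0|exact: ltW].
  have [hX|hX] := pselect (has_ubound (SY alpha N)); last first.
    by rewrite /M sup_out ?invr0 // => -[].
  move: M0; rewrite le_eqVlt => /orP[/eqP <-|Mp]; first by rewrite invr0.
  case: (posnP m) => [m0|mpos].
    have M1 : 1 <= M by exact: (sup_ge1 Hm m0 hX hq0).
    by rewrite apow1 // m0 expr0 divr1 invf_le1.
  have key := core2 HN Hm mpos hX.
  have Na := Navec_gt0 HN Hm mpos.
  rewrite -[N _ ^+ m / _]invf_div lef_pV2 ?posrE //.
  by apply: divr_gt0 => //; apply: exprn_gt0.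
Qed.
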